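(* Let $\Gamma$ be a set of $\langle\cdot\rangle$-free formulas and $\phi$ a $\langle\cdot\rangle$-free formula. (1) If $\phi$ is derivable from $\Gamma$ in the Hilbert system $H_1$, then $\Gamma\vdash_{\mathbf{Ck}+\mathrm{cut}}\phi$. (2) If $\phi$ is derivable from $\Gamma$ in the Hilbert system $H_2$, then $\Gamma\vdash_{\mathbf{CK}}\phi$.
   Context: Formulas: built from propositional variables and the constant $\bot$ using $\lnot$, the binary connectives $\supset,\land,\lor$, and two binary conditional operators $[\phi]\psi$ and $\langle\phi\rangle\psi$ (treated as primitive by tableau rules). $\top$ abbreviates $\lnot\bot$; $\phi\equiv\psi$ abbreviates $(\phi\supset\psi)\land(\psi\supset\phi)$. ''$\langle\cdot\rangle$-free'' means not containing the operator $\langle\cdot\rangle$. Hilbert systems: the theorems of $H_1$ form the smallest set of $\langle\cdot\rangle$-free formulas containing all substitution instances of propositional tautologies and all instances of CM: $[\phi](\psi\land\theta)\supset([\phi]\psi\land[\phi]\theta)$, CC: $([\phi]\psi\land[\phi]\theta)\supset[\phi](\psi\land\theta)$, CN: $[\phi]\top$, and closed under modus ponens and RCEC (from $\psi\equiv\theta$ infer $[\phi]\psi\equiv[\phi]\theta$). $H_2$ is defined the same way but additionally closed under RCEA (from $\phi\equiv\psi$ infer $[\phi]\theta\equiv[\psi]\theta$). $\phi$ is derivable from $\Gamma$ in $H_n$ if there is a finite sequence ending in $\phi$ each member of which is in $\Gamma$, a theorem of $H_n$, or follows from earlier members by modus ponens. Tableaux: indices are positive integers. Prefixed formulas are expressions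 $i:\phi$ and $i\,r_\phi\,j$. For a set $\Gamma$ of formulas and a formula $\phi$, a tableau for $(\Gamma,\phi)$ is a finite downward-branching tree labelled by prefixed formulas, each of which is either an assumption ($1:\psi$ with $\psi\in\Gamma$, or $1:\lnot\phi$) or obtained by applying a branch extension rule to prefixed formulas on its branch; applying a non-branching rule appends its conclusions to the branch, applying a branching rule splits the branch into one child branch per alternative, each alternative appending its listed conclusions. A branch is closed if it contains $i:\chi$ and $i:\lnot\chi$ for some $i,\chi$, or contains $i:\bot$; a tableau is closed if all branches are closed. $\Gamma\vdash_X\phi$ means there is a closed $X$-tableau for $(\Gamma,\phi)$. Basic ($\mathbf{Ck}$) rules: from $i:\phi\land\psi$ add $i:\phi,i:\psi$; from $i:\lnot(\phi\land\psi)$ branch into $i:\lnot\phi\mid i:\lnot\psi$; from $i:\phi\lor\psi$ branch into $i:\phi\mid i:\psi$; from $i:\lnot(\phi\lor\psi)$ add $i:\lnot\phi,i:\lnot\psi$; from $i:\phi\supset\psi$ branch into $i:\lnot\phi\mid i:\psi$; from $i:\lnot(\phi\supset\psi)$ add $i:\phi,i:\lnot\psi$; from $i:\lnot\lnot\phi$ add $i:\phi$; ($\Box$) from $i:[\phi]\psi$ and $i\,r_\phi\,j$ add $j:\psi$; ($\lnot\Box$) from $i:\lnot[\phi]\psi$ add $i\,r_\phi\,j$ and $j:\lnot\psi$ with $j$ new to the branch; ($\Diamond$) from $i:\langle\phi\rangle\psi$ add $i\,r_\phi\,j$ and $j:\psi$ with $j$ new; ($\lnot\Diamond$) from $i:\lnot\langle\phi\rangle\psi$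 and $i\,r_\phi\,j$ add $j:\lnot\psi$. (cut) for any index $i$ already on the branch and any formula $\phi$, branch into $i:\phi\mid i:\lnot\phi$. (ea) from $i\,r_\phi\,j$ and any formula $\psi$, branch into ($k:\lnot\phi$, $k:\psi$) $\mid$ ($k:\phi$, $k:\lnot\psi$) $\mid$ $i\,r_\psi\,j$, with $k$ new to the branch. $\mathbf{Ck}+\mathrm{cut}$ uses the basic rules and cut; $\mathbf{CK}$ uses the basic rules, cut and ea. *)

(* Defs.v *)
From Stdlib Require Import List.
Import ListNotations.

Inductive form : Type :=
| Var : nat -> form
| Bot : form
| Neg : form -> form
| Imp : form -> form -> form
| And : form -> form -> form
| Or  : form -> form -> form
| Box : form -> form -> form   (* [phi]psi *)
| Dia : form -> form -> form.  (* <phi>psi *)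

Definition Top : form := Neg Bot.
Definition Equiv (a b : form) : form := And (Imp a b) (Imp b a).

Fixpoint dia_free (a : form) : bool :=
  match a with
  | Var _ | Bot => true
  | Neg b => dia_free b
  | Imp b c | And b c | Or b c | Box b c => dia_free b && dia_free c
  | Dia _ _ => false
  end.

Fixpoint propositional (a : form) : bool :=
  match a with
  | Var _ | Bot => true
  | Neg b => propositional b
  | Imp b c | And b c | Or b c => propositional b && propositional c
  | Box _ _ | Dia _ _ => false
  end.

Fixpoint peval (v : nat -> bool) (a : form) : bool :=
  match a with
  | Var n => v n
  | Bot => false
  | Neg b => negb (peval v b)
  | Imp b c => implb (peval v b) (peval v c)
  | And b c => peval v b && peval v c
  | Or b c => peval v b || peval v c
  | Box _ _ | Dia _ _ => false
  end.

Definition tautology (p : form) : Prop :=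
  propositional p = true /\ forall v : nat -> bool, peval v p = true.

Fixpoint subst (s : nat -> form) (a : form) : form :=
  match a with
  | Var n => s n
  | Bot => Bot
  | Neg b => Neg (subst s b)
  | Imp b c => Imp (subst s b) (subst s c)
  | And b c => And (subst s b) (subst s c)
  | Or b c => Or (subst s b) (subst s c)
  | Box b c => Box (subst s b) (subst s c)
  | Dia b c => Dia (subst s b) (subst s c)
  end.

Definition taut_instance (a : form) : Prop :=
  exists (p : form) (s : nat -> form), tautology p /\ a = subst s p.

Inductive hthm (rcea : bool) : form -> Prop :=
| h_taut a : taut_instance a -> dia_free a = true -> hthm rcea a
| h_CM a b c : dia_free a = true -> dia_free b = true -> dia_free c = true ->
    hthm rcea (Imp (Box a (And b c)) (And (Box a b) (Box a c)))
| h_CC a b c : dia_free a = true -> dia_free b = true -> dia_free c = true ->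
    hthm rcea (Imp (And (Box a b) (Box a c)) (Box a (And b c)))
| h_CN a : dia_free a = true -> hthm rcea (Box a Top)
| h_MP a b : hthm rcea a -> hthm rcea (Imp a b) -> hthm rcea b
| h_RCEC a b c : dia_free a = true -> hthm rcea (Equiv b c) ->
    hthm rcea (Equiv (Box a b) (Box a c))
| h_RCEA a b c : rcea = true -> dia_free c = true -> hthm rcea (Equiv a b) ->
    hthm rcea (Equiv (Box a c) (Box b c)).

Definition H1thm : form -> Prop := hthm false.
Definition H2thm : form -> Prop := hthm true.

(** Derivability from a set of premises (closure of Gamma and the theorems
    under modus ponens; equivalently, existence of a finite derivation). *)
Inductive derivable (thm : form -> Prop) (Gamma : form -> Prop) : form -> Prop :=
| d_prem a : Gamma a -> derivable thm Gamma a
| d_thm a : thm a -> derivable thm Gamma a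
| d_MP a b : derivable thm Gamma a -> derivable thm Gamma (Imp a b) ->
    derivable thm Gamma b.

(* prefixed formulas: i : phi   and   i r_phi j  (indices are positive nats) *)
Inductive pform : Type :=
| PF : nat -> form -> pform
| PR : nat -> form -> nat -> pform.

Definition branch := list pform.

Definition on_branch (i : nat) (B : branch) : Prop :=
  exists x, In x B /\
    match x with
    | PF k _ => k = i
    | PR k _ l => k = i \/ l = i
    end.

Definition fresh (j : nat) (B : branch) : Prop := 0 < j /\ ~ on_branch j B.

Definition closed_branch (B : branch) : Prop :=
  (exists i c, In (PF i c) B /\ In (PF i (Neg c)) B) \/ (exists i, In (PF i Bot) B).

(* [rule cut ea B alts]: a rule applicable to prefixed formulas on B, whose
   alternatives (one per child branch) are the lists of conclusions in [alts]. *)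
Inductive rule (cut ea : bool) (B : branch) : list (list pform) -> Prop :=
| r_and i a b : In (PF i (And a b)) B -> rule cut ea B [[PF i a; PF i b]]
| r_nand i a b : In (PF i (Neg (And a b))) B ->
    rule cut ea B [[PF i (Neg a)]; [PF i (Neg b)]]
| r_or i a b : In (PF i (Or a b)) B -> rule cut ea B [[PF i a]; [PF i b]]
| r_nor i a b : In (PF i (Neg (Or a b))) B ->
    rule cut ea B [[PF i (Neg a); PF i (Neg b)]]
| r_imp i a b : In (PF i (Imp a b)) B -> rule cut ea B [[PF i (Neg a)]; [PF i b]]
| r_nimp i a b : In (PF i (Neg (Imp a b))) B ->
    rule cut ea B [[PF i a; PF i (Neg b)]]
| r_nneg i a : In (PF i (Neg (Neg a))) B -> rule cut ea B [[PF i a]]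
| r_box i a b j : In (PF i (Box a b)) B -> In (PR i a j) B ->
    rule cut ea B [[PF j b]]
| r_nbox i a b j : In (PF i (Neg (Box a b))) B -> fresh j B ->
    rule cut ea B [[PR i a j; PF j (Neg b)]]
| r_dia i a b j : In (PF i (Dia a b)) B -> fresh j B ->
    rule cut ea B [[PR i a j; PF j b]]
| r_ndia i a b j : In (PF i (Neg (Dia a b))) B -> In (PR i a j) B ->
    rule cut ea B [[PF j (Neg b)]]
| r_cut i a : cut = true -> on_branch i B ->
    rule cut ea B [[PF i a]; [PF i (Neg a)]]
| r_ea i a j b k : ea = true -> In (PR i a j) B -> fresh k B ->
    rule cut ea B [[PF k (Neg a); PF k b]; [PF k a; PF k (Neg b)]; [PR i b j]].

(* [closes cut ea Gamma phi B]: the branch B can be extended to a finite tree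
   (assumptions 1:psi with psi in Gamma, 1:~phi, and rule applications) all of
   whose branches are closed. *)
Inductive closes (cut ea : bool) (Gamma : form -> Prop) (phi : form) :
    branch -> Prop :=
| c_closed B : closed_branch B -> closes cut ea Gamma phi B
| c_assm B psi : Gamma psi -> closes cut ea Gamma phi (B ++ [PF 1 psi]) ->
    closes cut ea Gamma phi B
| c_assm_neg B : closes cut ea Gamma phi (B ++ [PF 1 (Neg phi)]) ->
    closes cut ea Gamma phi B
| c_rule B alts : rule cut ea B alts ->
    (forall l, In l alts -> closes cut ea Gamma phi (B ++ l)) ->
    closes cut ea Gamma phi B.

Definition vdash_Ckcut (Gamma : form -> Prop) (phi : form) : Prop :=
  closes true false Gamma phi [].
Definition vdash_CK (Gamma : form -> Prop) (phi : form) : Prop :=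
  closes true true Gamma phi [].

(* Main.v *)
Require Import Defs.
From Stdlib Require Import List Lia Bool.
Import ListNotations.

Ltac inb := first [ assumption
  | (apply in_or_app; first [solve [left; inb] | solve [right; inb]])
  | solve [simpl; intuition] ].

Lemma step1 ea G p B l : rule true ea B [l] -> closes true ea G p (B++l) -> closes true ea G p B.
Proof. intros R H. apply c_rule with [l]; auto. intros l' [<-|[]]; auto. Qed.

Lemma step2 ea G p B l1 l2 : rule true ea B [l1;l2] -> closes true ea G p (B++l1) ->
  closes true ea G p (B++l2) -> closes true ea G p B.
Proof. intros R H1 H2. apply c_rule with [l1;l2]; auto. intros l' [<-|[<-|[]]]; auto. Qed.

Lemma clos ea G p B i c : In (PF i c) B -> In (PF i (Neg c)) B -> closes true ea G p B.
Proof. intros. apply c_closed; left; eauto. Qed.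

Fixpoint maxi (B:branch) : nat := match B with [] => 0
  | PF k _ :: r => max k (maxi r) | PR k _ l :: r => max k (max l (maxi r)) end.

Lemma le_maxi x B : In x B -> match x with PF k _ => k <= maxi B
   | PR k _ l => k <= maxi B /\ l <= maxi B end.
Proof.
  induction B as [|y B IH]; simpl; [tauto|]. intros [->|H].
  - destruct x; lia.
  - specialize (IH H). destruct x, y; lia.
Qed.

Lemma fresh_S B : fresh (S (maxi B)) B.
Proof.
  split; [lia|]. intros [x [Hx Hm]]. apply le_maxi in Hx. destruct x; lia.
Qed.

Lemma on_In i a B : In (PF i a) B -> on_branch i B.
Proof. intros H. exists (PF i a); auto. Qed.

Lemma on_app i B l : on_branch i B -> on_branch i (B++l).
Proof. intros [x [Hx Hm]]. exists x; split; auto. apply in_or_app; auto. Qed.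

Lemma nbox_step ea G p B i a b : In (PF i (Neg (Box a b))) B ->
  (forall j, closes true ea G p (B ++ [PR i a j; PF j (Neg b)])) -> closes true ea G p B.
Proof. intros H K. eapply step1; [apply r_nbox with (j := S (maxi B)); [exact H|apply fresh_S]|apply K]. Qed.

Lemma use_thm ea G p t B i : (forall B, In (PF i (Neg t)) B -> closes true ea G p B) ->
  on_branch i B -> closes true ea G p (B ++ [PF i t]) -> closes true ea G p B.
Proof.
  intros H Ho K. apply (step2 _ _ _ _ [PF i t] [PF i (Neg t)]); [apply r_cut; auto| exact K| apply H; inb].
Qed.

Lemma use_equiv ea G p a b B k : (forall B, In (PF k (Neg (Equiv a b))) B -> closes true ea G p B) ->
  on_branch k B ->
  ((In (PF k a) B /\ In (PF k (Neg b)) B) \/ (In (PF k b) B /\ In (PF k (Neg a)) B)) ->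
  closes true ea G p B.
Proof.
  intros H Ho Hc. apply (use_thm _ _ _ _ _ _ H Ho). unfold Equiv.
  apply (step1 _ _ _ _ [PF k (Imp a b); PF k (Imp b a)]); [apply r_and; inb|].
  destruct Hc as [[H1 H2]|[H1 H2]].
  - apply (step2 _ _ _ _ [PF k (Neg a)] [PF k b]); [apply (r_imp _ _ _ k a b); inb | apply (clos _ _ _ _ k a); inb | apply (clos _ _ _ _ k b); inb].
  - apply (step2 _ _ _ _ [PF k (Neg b)] [PF k a]); [apply (r_imp _ _ _ k b a); inb | apply (clos _ _ _ _ k b); inb | apply (clos _ _ _ _ k a); inb].
Qed.

Ltac useP H := first [solve [apply (proj1 H); auto; inb] | solve [apply (proj2 H); auto; inb]].
Ltac useQ IH Hp L := first [solve [eapply (proj1 (IH Hp _ (L _))); auto; inb] | solve [eapply (proj2 (IH Hp _ (L _))); auto; inb]].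

Fixpoint vars (a : form) : list nat := match a with
  | Var n => [n] | Bot => [] | Neg b => vars b
  | Imp b c | And b c | Or b c | Box b c | Dia b c => vars b ++ vars c end.

Definition lit (s : nat -> form) (v : nat -> bool) (n : nat) : form :=
  if v n then s n else Neg (s n).

Lemma prop_lem ea G p s i v : forall q, propositional q = true -> forall B,
  (forall n, In n (vars q) -> In (PF i (lit s v n)) B) ->
  (peval v q = false -> In (PF i (subst s q)) B -> closes true ea G p B) /\
  (peval v q = true -> In (PF i (Neg (subst s q))) B -> closes true ea G p B).
Proof.
  induction q; simpl; intros Hp B Hl; try discriminate.
  - specialize (Hl n (or_introl eq_refl)). unfold lit in Hl.
    split; intros Hv Hin; rewrite Hv in Hl.
    + apply (clos _ _ _ _ i (s n)); auto.
    + apply (clos _ _ _ _ i (s n)); auto.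
  - split; intros; [apply c_closed; right; eauto | discriminate].
  - split; intros Hv Hin.
    + destruct (peval v q) eqn:E; try discriminate. useP (IHq Hp B Hl).
    + destruct (peval v q) eqn:E; try discriminate.
      apply (step1 _ _ _ _ [PF i (subst s q)]); [apply r_nneg; auto|].
      assert (L: forall n, In n (vars q) -> In (PF i (lit s v n)) (B ++ [PF i (subst s q)])) by (intros n Hn; apply in_or_app; left; auto).
      useP (IHq Hp _ L).
  - apply andb_prop in Hp as [Hp1 Hp2].
    assert (L1: forall l n, In n (vars q1) -> In (PF i (lit s v n)) (B ++ l)).
    { intros l n Hn. apply in_or_app; left; apply Hl, in_or_app; auto. }
    assert (L2: forall l n, In n (vars q2) -> In (PF i (lit s v n)) (B ++ l)).
    { intros l n Hn. apply in_or_app; left; apply Hl, in_or_app; auto. }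
    split; intros Hv Hin.
    + destruct (peval v q1) eqn:E1, (peval v q2) eqn:E2; simpl in Hv; try discriminate.
      apply (step2 _ _ _ _ [PF i (Neg (subst s q1))] [PF i (subst s q2)]); [apply r_imp; auto| |].
      * useQ IHq1 Hp1 L1.
      * useQ IHq2 Hp2 L2.
    + apply (step1 _ _ _ _ [PF i (subst s q1); PF i (Neg (subst s q2))]); [apply r_nimp; auto|].
      destruct (peval v q1) eqn:E1.
      * destruct (peval v q2) eqn:E2; simpl in Hv; try discriminate.
        useQ IHq2 Hp2 L2.
      * useQ IHq1 Hp1 L1.
  - apply andb_prop in Hp as [Hp1 Hp2].
    assert (L1: forall l n, In n (vars q1) -> In (PF i (lit s v n)) (B ++ l)).
    { intros l n Hn. apply in_or_app; left; apply Hl, in_or_app; auto. }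
    assert (L2: forall l n, In n (vars q2) -> In (PF i (lit s v n)) (B ++ l)).
    { intros l n Hn. apply in_or_app; left; apply Hl, in_or_app; auto. }
    split; intros Hv Hin.
    + apply (step1 _ _ _ _ [PF i (subst s q1); PF i (subst s q2)]); [apply r_and; auto|].
      destruct (peval v q1) eqn:E1.
      * useQ IHq2 Hp2 L2.
      * useQ IHq1 Hp1 L1.
    + destruct (peval v q1) eqn:E1, (peval v q2) eqn:E2; simpl in Hv; try discriminate.
      apply (step2 _ _ _ _ [PF i (Neg (subst s q1))] [PF i (Neg (subst s q2))]); [apply r_nand; auto| |].
      * useQ IHq1 Hp1 L1.
      * useQ IHq2 Hp2 L2.
  - apply andb_prop in Hp as [Hp1 Hp2].
    assert (L1: forall l n, In n (vars q1) -> In (PF i (lit s v n)) (B ++ l)).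
    { intros l n Hn. apply in_or_app; left; apply Hl, in_or_app; auto. }
    assert (L2: forall l n, In n (vars q2) -> In (PF i (lit s v n)) (B ++ l)).
    { intros l n Hn. apply in_or_app; left; apply Hl, in_or_app; auto. }
    split; intros Hv Hin.
    + destruct (peval v q1) eqn:E1, (peval v q2) eqn:E2; simpl in Hv; try discriminate.
      apply (step2 _ _ _ _ [PF i (subst s q1)] [PF i (subst s q2)]); [apply r_or; auto| |].
      * useQ IHq1 Hp1 L1.
      * useQ IHq2 Hp2 L2.
    + apply (step1 _ _ _ _ [PF i (Neg (subst s q1)); PF i (Neg (subst s q2))]); [apply r_nor; auto|].
      destruct (peval v q1) eqn:E1.
      * useQ IHq1 Hp1 L1.
      * useQ IHq2 Hp2 L2.
Qed.

Lemma form_eq_dec (a b : form) : {a = b} + {a <> b}.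
Proof. decide equality; apply PeanoNat.Nat.eq_dec. Qed.
Lemma pform_eq_dec (a b : pform) : {a = b} + {a <> b}.
Proof. decide equality; try apply PeanoNat.Nat.eq_dec; apply form_eq_dec. Qed.

Lemma cut_all ea G p (s : nat -> form) i : forall L B, on_branch i B ->
  (forall B', incl B B' -> (forall n, In n L -> In (PF i (s n)) B' \/ In (PF i (Neg (s n))) B') ->
     closes true ea G p B') -> closes true ea G p B.
Proof.
  induction L as [|a L IH]; intros B Hon H.
  - apply H; [apply incl_refl | simpl; tauto].
  - apply (step2 _ _ _ _ [PF i (s a)] [PF i (Neg (s a))]); [apply r_cut; auto| |];
    apply IH; try (apply on_app; auto); intros B' Hinc Hall; apply H.
    + intros x Hx; apply Hinc, in_or_app; auto.
    + intros n [<-|Hn]; auto. left; apply Hinc; inb.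
    + intros x Hx; apply Hinc, in_or_app; auto.
    + intros n [<-|Hn]; auto. right; apply Hinc; inb.
Qed.

Lemma taut_cl ea G p t B i : taut_instance t -> In (PF i (Neg t)) B -> closes true ea G p B.
Proof.
  intros [q [s [[Hp Hv] ->]]] Hin.
  apply (cut_all ea G p s i (vars q)); [eapply on_In; eauto|].
  intros B' Hinc Hall.
  set (v := fun n => if in_dec pform_eq_dec (PF i (s n)) B' then true else false).
  assert (HL : forall n, In n (vars q) -> In (PF i (lit s v n)) B').
  { intros n Hn. unfold lit, v. destruct (in_dec pform_eq_dec (PF i (s n)) B'); auto.
    destruct (Hall n Hn); tauto. }
  apply (proj2 (prop_lem ea G p s i v q Hp B' HL)); auto.
Qed.

Lemma thm_cl rcea t (H : hthm rcea t) : forall ea G p, (rcea = true -> ea = true) ->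
  forall B i, In (PF i (Neg t)) B -> closes true ea G p B.
Proof.
  induction H; intros ea G p Hea B i Hin.
  - eapply taut_cl; eauto.
  - apply (step1 _ _ _ _ [PF i (Box a (And b c)); PF i (Neg (And (Box a b) (Box a c)))]); [apply r_nimp; auto|].
    apply (step2 _ _ _ _ [PF i (Neg (Box a b))] [PF i (Neg (Box a c))]); [apply r_nand; inb| |].
    + eapply nbox_step; [inb|]. intro j.
      apply (step1 _ _ _ _ [PF j (And b c)]); [apply (r_box _ _ _ i a); inb|].
      apply (step1 _ _ _ _ [PF j b; PF j c]); [apply r_and; inb|].
      apply (clos _ _ _ _ j b); inb.
    + eapply nbox_step; [inb|]. intro j.
      apply (step1 _ _ _ _ [PF j (And b c)]); [apply (r_box _ _ _ i a); inb|].
      apply (step1 _ _ _ _ [PF j b; PF j c]); [apply r_and; inb|].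
      apply (clos _ _ _ _ j c); inb.
  - apply (step1 _ _ _ _ [PF i (And (Box a b) (Box a c)); PF i (Neg (Box a (And b c)))]); [apply r_nimp; auto|].
    apply (step1 _ _ _ _ [PF i (Box a b); PF i (Box a c)]); [apply r_and; inb|].
    eapply nbox_step; [inb|]. intro j.
    apply (step1 _ _ _ _ [PF j b]); [apply (r_box _ _ _ i a); inb|].
    apply (step1 _ _ _ _ [PF j c]); [apply (r_box _ _ _ i a); inb|].
    apply (step2 _ _ _ _ [PF j (Neg b)] [PF j (Neg c)]); [apply r_nand; inb| |].
    + apply (clos _ _ _ _ j b); inb.
    + apply (clos _ _ _ _ j c); inb.
  - eapply nbox_step; [exact Hin|]. intro j. unfold Top.
    apply (step1 _ _ _ _ [PF j Bot]); [apply r_nneg; inb|].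
    apply c_closed; right; exists j; inb.
  - apply (use_thm _ _ _ (Imp a b) _ i); [intros; eapply IHhthm2; eauto | eapply on_In; eauto |].
    apply (step2 _ _ _ _ [PF i (Neg a)] [PF i b]); [apply r_imp; inb| |].
    + eapply IHhthm1; eauto; inb.
    + apply (clos _ _ _ _ i b); inb.
  - unfold Equiv in Hin.
    apply (step2 _ _ _ _ [PF i (Neg (Imp (Box a b) (Box a c)))] [PF i (Neg (Imp (Box a c) (Box a b)))]); [apply r_nand; auto| |].
    + apply (step1 _ _ _ _ [PF i (Box a b); PF i (Neg (Box a c))]); [apply r_nimp; inb|].
      eapply nbox_step; [inb|]. intro j.
      apply (step1 _ _ _ _ [PF j b]); [apply (r_box _ _ _ i a); inb|].
      apply (use_equiv _ _ _ b c _ j); [intros; eapply IHhthm; eauto | eapply on_In with (a := b); inb | left; split; inb].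
    + apply (step1 _ _ _ _ [PF i (Box a c); PF i (Neg (Box a b))]); [apply r_nimp; inb|].
      eapply nbox_step; [inb|]. intro j.
      apply (step1 _ _ _ _ [PF j c]); [apply (r_box _ _ _ i a); inb|].
      apply (use_equiv _ _ _ b c _ j); [intros; eapply IHhthm; eauto | eapply on_In with (a := c); inb | right; split; inb].
  - unfold Equiv in Hin. match goal with h : rcea = true |- _ => specialize (Hea h) end.
    apply (step2 _ _ _ _ [PF i (Neg (Imp (Box a c) (Box b c)))] [PF i (Neg (Imp (Box b c) (Box a c)))]); [apply r_nand; auto| |].
    + apply (step1 _ _ _ _ [PF i (Box a c); PF i (Neg (Box b c))]); [apply r_nimp; inb|].
      eapply nbox_step; [inb|]. intro j.
      set (B1 := ((B ++ _) ++ _) ++ _).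
      apply c_rule with (alts := [[PF (S (maxi B1)) (Neg b); PF (S (maxi B1)) a];
         [PF (S (maxi B1)) b; PF (S (maxi B1)) (Neg a)]; [PR i a j]]);
        [apply r_ea; [auto | unfold B1; inb | apply fresh_S]|].
      intros l [<-|[<-|[<-|[]]]].
      * apply (use_equiv _ _ _ a b _ (S (maxi B1))); [intros; eapply IHhthm; eauto | eapply on_In with (a := a); inb | left; split; inb].
      * apply (use_equiv _ _ _ a b _ (S (maxi B1))); [intros; eapply IHhthm; eauto | eapply on_In with (a := b); inb | right; split; inb].
      * apply (step1 _ _ _ _ [PF j c]); [apply (r_box _ _ _ i a); unfold B1; inb|].
        apply (clos _ _ _ _ j c); unfold B1; inb.
    + apply (step1 _ _ _ _ [PF i (Box b c); PF i (Neg (Box a c))]); [apply r_nimp; inb|].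
      eapply nbox_step; [inb|]. intro j.
      set (B1 := ((B ++ _) ++ _) ++ _).
      apply c_rule with (alts := [[PF (S (maxi B1)) (Neg a); PF (S (maxi B1)) b];
         [PF (S (maxi B1)) a; PF (S (maxi B1)) (Neg b)]; [PR i b j]]);
        [apply r_ea; [auto | unfold B1; inb | apply fresh_S]|].
      intros l [<-|[<-|[<-|[]]]].
      * apply (use_equiv _ _ _ a b _ (S (maxi B1))); [intros; eapply IHhthm; eauto | eapply on_In with (a := b); inb | right; split; inb].
      * apply (use_equiv _ _ _ a b _ (S (maxi B1))); [intros; eapply IHhthm; eauto | eapply on_In with (a := a); inb | left; split; inb].
      * apply (step1 _ _ _ _ [PF j c]); [apply (r_box _ _ _ i b); unfold B1; inb|].
        apply (clos _ _ _ _ j c); unfold B1; inb.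
Qed.

Lemma der_cl (thm : form -> Prop) ea G p
  (Hth : forall t, thm t -> forall B i, In (PF i (Neg t)) B -> closes true ea G p B) :
  forall a, derivable thm G a -> forall B, In (PF 1 (Neg a)) B -> closes true ea G p B.
Proof.
  induction 1 as [a Ha|a Ha|a b Da IHa Db IHb]; intros B Hin.
  - apply c_assm with a; auto. apply (clos _ _ _ _ 1 a); inb.
  - eapply Hth; eauto.
  - apply (use_thm _ _ _ (Imp a b) _ 1); [intros; eapply IHb; eauto | eapply on_In; eauto |].
    apply (step2 _ _ _ _ [PF 1 (Neg a)] [PF 1 b]); [apply r_imp; inb| |].
    + eapply IHa; inb.
    + apply (clos _ _ _ _ 1 b); inb.
Qed.

Theorem mainTheorem5 (Gamma : form -> Prop) (phi : form) :
  (forall psi, Gamma psi -> dia_free psi = true) ->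
  dia_free phi = true ->
  (derivable H1thm Gamma phi -> vdash_Ckcut Gamma phi) /\
  (derivable H2thm Gamma phi -> vdash_CK Gamma phi).
Proof.
  intros _ _. split; intros D; apply c_assm_neg; simpl.
  - eapply der_cl; [|exact D|simpl; auto].
    intros t Ht B i Hi. eapply (thm_cl false t Ht); eauto.
  - eapply der_cl; [|exact D|simpl; auto].
    intros t Ht B i Hi. eapply (thm_cl true t Ht); eauto.
Qed.
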